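(* Let $K=\mathbb{F}_q$ be a finite field, $S=K[t_1,\ldots,t_s]$, let $\mathbb{X}\subset\mathbb{P}^{s-1}$ with $|\mathbb{X}|\geq 2$, let $I=I(\mathbb{X})$, and let $\prec$ be a monomial order on $S$. Then for every $d\geq 1$, $$\delta_{\mathbb{X}}(d)=\deg(S/I)-\max\{\deg(S/(I,f)): f\in\mathcal{F}_{\prec,d}\}\geq 1.$$
   Context: $I(\mathbb{X})$ is the ideal generated by the homogeneous polynomials vanishing on $\mathbb{X}$; $V_{\mathbb{X}}(f)$ is the set of zeros of a form $f$ in $\mathbb{X}$. $\delta_{\mathbb{X}}(d)$ is the minimum distance of the projective Reed–Muller-type code of degree $d$ on $\mathbb{X}$, i.e. $\delta_{\mathbb{X}}(d)=\min\{|\mathbb{X}|-|V_{\mathbb{X}}(f)|: f\in S_d,\ f\notin I(\mathbb{X})\}$. If $\{t^{a_1},\ldots,t^{a_n}\}$ is the set of standard monomials of degree $d$ (monomials of degree $d$ not in the initial ideal $\mathrm{in}_\prec(I)$), then $\mathcal{F}_{\prec,d}=\{f=\sum_i\lambda_it^{a_i}: \lambda_i\in K,\ f\neq0,\ (I\colon f)\neq I\}$, where $(I\colon f)=\{h\in S:hf\in I\}$. For a graded ideal $J$ with Hilbert function $H_J(d)=\dim_K(S_d/J_d)$ and $k=\dim(S/J)$, $\deg(S/J)=(k-1)!\lim_{d\to\infty}H_J(d)/d^{k-1}$ if $k\geq1$ and $\dim_K(S/J)$ if $k=0$. *)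

(* Defs.v *)
From HB Require Import structures.
From mathcomp Require Import all_boot all_order all_algebra.
From mathcomp Require Import mpoly.
From mathcomp Require Import boolp.

Set Implicit Arguments.
Unset Strict Implicit.
Unset Printing Implicit Defensive.

Import Order.TTheory GRing.Theory Num.Theory.
Local Open Scope ring_scope.

Section Defs.
Variables (K : fieldType) (s : nat).
Local Notation S := {mpoly K[s]}.

Definition pset := S -> Prop.

Definition gen_ideal (G : pset) : pset :=
  fun f => exists l : seq (S * S),
    f = \big[+%R/0]_(p <- l) (p.1 * p.2) /\ (forall p, p \in l -> G p.2).

Definition ideal_add (J : pset) (f : S) : pset :=
  gen_ideal (fun h => J h \/ h = f).

Definition colon (J : pset) (f : S) : pset := fun h => J (h * f).

Definition is_ideal (P : pset) : Prop :=
  P 0 /\ (forall a b, P a -> P b -> P (a + b)) /\ (forall r a, P a -> P (r * a)).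

Definition is_prime (P : pset) : Prop :=
  is_ideal P /\ ~ P 1 /\ (forall a b, P (a * b) -> P a \/ P b).

Definition subset_strict (P Q : pset) : Prop :=
  (forall f, P f -> Q f) /\ exists f, Q f /\ ~ P f.

Definition prime_chain (J : pset) (k : nat) : Prop :=
  exists c : nat -> pset,
    (forall i, (i <= k)%N -> is_prime (c i)) /\
    (forall f, J f -> c 0%N f) /\
    (forall i, (i < k)%N -> subset_strict (c i) (c i.+1)).

Definition krull_dim (J : pset) (k : nat) : Prop :=
  prime_chain J k /\ ~ prime_chain J k.+1.

Definition monoms (d : nat) := {m : 'X_{1..s < d.+1} | mdeg m == d}.

Definition nmonoms (d : nat) : nat := #|{: monoms d}|.

Definition poly_of (d : nat) (v : 'rV[K]_(nmonoms d)) : S :=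
  \big[+%R/0]_(i < nmonoms d) (v 0 i *: 'X_[val (val (@enum_val _ (mem {: monoms d}) i))]).

End Defs.

Section FinDefs.
Variables (K : finFieldType) (s : nat).
Local Notation S := {mpoly K[s]}.

(* J_d, as a set of coefficient vectors in K^(monomials of degree d) ~ S_d *)
Definition graded_piece (J : pset K s) (d : nat) : seq 'rV[K]_(nmonoms s d) :=
  [seq v <- enum [set: 'rV[K]_(nmonoms s d)] | asbool (J (poly_of v))].

(* Hilbert function H_J(d) = dim_K (S_d / J_d) = dim_K S_d - dim_K J_d *)
Definition hilbert_fun (J : pset K s) (d : nat) : nat :=
  (nmonoms s d - \dim (span (graded_piece J d)))%N.

(* deg(S/J) = e, where k = dim(S/J):
   if k >= 1, e = (k-1)! lim_{d -> oo} H_J(d)/d^(k-1);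
   if k = 0,  e = dim_K (S/J) = sum_d H_J(d)  (J graded, H_J eventually 0). *)
Definition has_degree (J : pset K s) (e : rat) : Prop :=
  exists k, krull_dim J k /\
   (if k is k'.+1 then
      forall eps : rat, 0 < eps -> exists N, forall d, (N <= d)%N ->
        `| (k'`!)%:R * (hilbert_fun J d)%:R / (d%:R ^+ k') - e | < eps
    else exists N, (forall d, (N <= d)%N -> hilbert_fun J d = 0%N) /\
                   e = (\big[addn/0%N]_(d < N) hilbert_fun J d)%:R).

(* Points of P^{s-1}(K): normalized representatives (first nonzero coordinate 1). *)
Definition normalized (x : {ffun 'I_s -> K}) : bool :=
  [exists i : 'I_s, (x i == 1) && [forall j : 'I_s, (j < i)%N ==> (x j == 0)]].

Definition vanishing_ideal (X : {set {ffun 'I_s -> K}}) : pset K s :=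
  gen_ideal (fun h => exists d, h \is d.-homog /\ forall x, x \in X -> h.@[x] = 0).

Definition zeros_in (X : {set {ffun 'I_s -> K}}) (f : S) : {set {ffun 'I_s -> K}} :=
  [set x in X | f.@[x] == 0].

End FinDefs.

Definition monomial_order (s : nat) (ord : rel 'X_{1..s}) : Prop :=
  reflexive ord /\ antisymmetric ord /\ transitive ord /\ total ord /\
  (forall m, ord 0%MM m) /\
  (forall m1 m2 m, ord m1 m2 -> ord (m1 + m)%MM (m2 + m)%MM).

Section OrderDefs.
Variables (K : fieldType) (s : nat) (ord : rel 'X_{1..s}).
Local Notation S := {mpoly K[s]}.

Definition is_lead_monom (f : S) (m : 'X_{1..s}) : Prop :=
  m \in msupp f /\ forall m', m' \in msupp f -> ord m' m.

Definition initial_ideal (J : pset K s) : pset K s :=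
  gen_ideal (fun h => exists g m, J g /\ g != 0 /\ is_lead_monom g m /\ h = 'X_[m]).

Definition standard_monom (J : pset K s) (d : nat) (m : 'X_{1..s}) : Prop :=
  mdeg m = d /\ ~ initial_ideal J 'X_[m].

Definition F_set (J : pset K s) (d : nat) : pset K s :=
  fun f => f != 0 /\ (forall m, m \in msupp f -> standard_monom J d m) /\
           ~ (forall h, colon J f h <-> J h).

End OrderDefs.

Definition is_min_nat (P : nat -> Prop) (x : nat) : Prop :=
  P x /\ forall y, P y -> (x <= y)%N.

Definition is_max_rat (P : rat -> Prop) (x : rat) : Prop :=
  P x /\ forall y, P y -> y <= x.

Definition min_distance (K : finFieldType) (s : nat) (X : {set {ffun 'I_s -> K}})
  (d : nat) (delta : nat) : Prop :=
  is_min_nat (fun v => exists f : {mpoly K[s]}, f \is d.-homog /\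
                 ~ vanishing_ideal X f /\ v = (#|X| - #|zeros_in X f|)%N) delta.

(* Main.v *)
Require Import Defs.
From HB Require Import structures.
From mathcomp Require Import all_boot all_order all_algebra.
From mathcomp Require Import mpoly.
From mathcomp Require Import boolp ring zify.
Set Implicit Arguments.
Unset Strict Implicit.
Unset Printing Implicit Defensive.
Import Order.TTheory GRing.Theory Num.Theory.
Local Open Scope ring_scope.
Section Ideals.
Variables (K : fieldType) (s : nat).
Local Notation S := {mpoly K[s]}.

Lemma gen_ideal_gen (G : pset K s) g : G g -> gen_ideal G g.
Proof.
move=> Gg; exists [:: (1, g)]; split; first by rewrite big_seq1 mul1r.
by move=> p; rewrite inE => /eqP ->.
Qed.

Lemma gen_ideal_is_ideal (G : pset K s) : is_ideal (gen_ideal G).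
Proof.
split; first by exists [::]; rewrite big_nil; split.
split.
  move=> a b [la [-> Ha]] [lb [-> Hb]]; exists (la ++ lb); split.
    by rewrite big_cat.
  by move=> p; rewrite mem_cat => /orP [/Ha|/Hb].
move=> r a [la [-> Ha]]; exists [seq (r * p.1, p.2) | p <- la]; split.
  by rewrite big_map mulr_sumr; apply: eq_bigr => p _ /=; rewrite mulrA.
by move=> p /mapP [q qin ->] /=; apply: Ha.
Qed.

Lemma ideal_ind (G Q : pset K s) : is_ideal Q -> (forall g, G g -> Q g) ->
  forall f, gen_ideal G f -> Q f.
Proof.
move=> [Q0 [QD QM]] QG f [l [-> Hl]].
elim: l Hl => [|p l IH] Hl; first by rewrite big_nil.
rewrite big_cons; apply: QD; first by apply: QM; apply: QG; apply: Hl; rewrite inE eqxx.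
by apply: IH => q qin; apply: Hl; rewrite inE qin orbT.
Qed.

Lemma ideal_sum (Q : pset K s) (I : eqType) (r : seq I) (F : I -> S) :
  is_ideal Q -> (forall i, i \in r -> Q (F i)) -> Q (\sum_(i <- r) F i).
Proof.
move=> [Q0 [QD QM]]; elim: r => [|i r IH] H; first by rewrite big_nil.
rewrite big_cons; apply: QD; first by apply: H; rewrite inE eqxx.
by apply: IH => j jin; apply: H; rewrite inE jin orbT.
Qed.

Lemma idealZ (Q : pset K s) c p : is_ideal Q -> Q p -> Q (c *: p).
Proof. by move=> [_ [_ QM]] Qp; rewrite -mul_mpolyC; apply: QM. Qed.

Lemma idealN (Q : pset K s) p : is_ideal Q -> Q p -> Q (- p).
Proof. by move=> HQ Qp; rewrite -scaleN1r; apply: idealZ. Qed.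

Lemma idealB (Q : pset K s) p q : is_ideal Q -> Q p -> Q q -> Q (p - q).
Proof. by move=> HQ Qp Qq; case: (HQ) => _ [QD _]; apply: QD => //; apply: idealN. Qed.

Lemma idealMr (Q : pset K s) p q : is_ideal Q -> Q p -> Q (p * q).
Proof. by move=> [_ [_ QM]] Qp; rewrite mulrC; apply: QM. Qed.

End Ideals.
Section Phi.
Variables (K : fieldType) (s : nat).
Local Notation S := {mpoly K[s]}.
Implicit Types (x : 'I_s -> K).

Definition phi x (p : S) : {poly K} := mmap (polyC : K -> {poly K}) (fun i => (x i)%:P * 'X) p.

Lemma phiM x : {morph phi x : p q / p * q}.
Proof. move=> p q; rewrite /phi; exact: rmorphM. Qed.
Lemma phiD x : {morph phi x : p q / p + q}.
Proof. move=> p q; rewrite /phi; exact: rmorphD. Qed.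
Lemma phiB x : {morph phi x : p q / p - q}.
Proof. move=> p q; rewrite /phi; exact: rmorphB. Qed.
Lemma phi0 x : phi x 0 = 0.
Proof. rewrite /phi; exact: rmorph0. Qed.
Lemma phi1 x : phi x 1 = 1.
Proof. rewrite /phi; exact: rmorph1. Qed.
Lemma phiZ x c p : phi x (c *: p) = c%:P * phi x p.
Proof. by rewrite /phi mmapZ. Qed.

Lemma mmap1_phi x m : mmap1 (fun i => (x i)%:P * 'X) m = (\prod_i x i ^+ m i)%:P * 'X^(mdeg m).
Proof.
rewrite /mmap1 (eq_bigr (fun i => (x i ^+ m i)%:P * 'X ^+ m i)); last first.
  by move=> i _; rewrite exprMn rmorphXn.
by rewrite big_split /= rmorph_prod prodrXr mdegE.
Qed.

Lemma phiX x m : phi x 'X_[m] = (\prod_i x i ^+ m i)%:P * 'X^(mdeg m).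
Proof. by rewrite /phi mmapX mmap1_phi. Qed.

Lemma mcoeff_pihomog e (p : S) m : (pihomog mdeg e p)@_m = if mdeg m == e then p@_m else 0.
Proof.
rewrite pihomogE raddf_sum /=.
rewrite (eq_bigr (fun m' => if m' == m then p@_m' else 0)); last first.
  by move=> m' _; rewrite mcoeffZ mcoeffX mulr_natr mulrb.
case: (boolP (m \in msupp p)) => Hm.
  rewrite (big_rem m Hm) /= eqxx big1_seq ?addr0.
    by case: ifP.
  move=> m' /andP[_ Hm']; case: (eqVneq m' m) => // E; move: Hm'.
  by rewrite E mem_rem_uniqF ?msupp_uniq.
rewrite big1_seq; first by case: ifP => //; move: Hm; rewrite mcoeff_msupp negbK => /eqP.
move=> m' /andP[_ Hm']; case: (eqVneq m' m) => // E; move: Hm; by rewrite -E Hm'.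
Qed.

Lemma coef_phi x (p : S) e : (phi x p)`_e = (pihomog mdeg e p).@[x].
Proof.
rewrite /phi /mmap coef_sum pihomogE raddf_sum /= [RHS]big_mkcond /=.
apply: eq_bigr => m _; rewrite mmap1_phi mulrA -rmorphM coefCM coefXn mevalZ mevalX.
by rewrite eq_sym; case: eqP; rewrite ?mulr1 ?mulr0.
Qed.

Lemma phi_homog x e (p : S) : p \is e.-homog -> phi x p = (p.@[x])%:P * 'X^e.
Proof.
move=> hp; apply/polyP => i; rewrite coef_phi coefCM coefXn.
case: (eqVneq i e) => [->|ne]; first by rewrite pihomog_dE // mulr1.
by rewrite (pihomog_ne0 (b:=i) (d:=e)) ?meval0 ?mulr0 // eq_sym.
Qed.

Lemma phi_homog_eq0 x e (p : S) : p \is e.-homog -> (phi x p == 0) = (p.@[x] == 0).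
Proof.
move=> hp; rewrite (phi_homog _ hp) mulf_eq0 polyC_eq0 expf_eq0 polyX_eq0 andbF orbF //.
Qed.

Lemma phi_eval1 x (p : S) : (phi x p).[1] = p.@[x].
Proof.
rewrite /phi /mmap horner_sum mevalE; apply: eq_bigr => m _.
by rewrite mmap1_phi mulrA -rmorphM hornerCM hornerXn expr1n mulr1.
Qed.
End Phi.
Section Van.
Variables (K : finFieldType) (s : nat).
Local Notation S := {mpoly K[s]}.
Variable X : {set {ffun 'I_s -> K}}.
Local Notation I := (vanishing_ideal X).

Lemma phi_ideal (Z : {set {ffun 'I_s -> K}}) :
  is_ideal (fun h : S => forall x, x \in Z -> phi x h = 0).
Proof.
split; first by move=> x _; rewrite phi0.
split; first by move=> a b Ha Hb x xZ; rewrite phiD Ha ?Hb ?addr0.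
by move=> r a Ha x xZ; rewrite phiM Ha ?mulr0.
Qed.

Lemma van_iff (h : S) : I h <-> forall x, x \in X -> phi x h = 0.
Proof.
split.
  move=> Hh; apply: (ideal_ind (phi_ideal X) _ Hh).
  by move=> g [e [hg Hg]] x xX; rewrite (phi_homog _ hg) Hg // polyC0 mul0r.
move=> H; rewrite (pihomog_partitionE (mf := mdeg) (leqnn (msize h))).
apply: ideal_sum; first exact: gen_ideal_is_ideal.
move=> e _; apply: gen_ideal_gen; exists e; split; first exact: pihomogP.
by move=> x xX; rewrite -coef_phi H // coef0.
Qed.

Lemma van_ideal : is_ideal I.
Proof. exact: gen_ideal_is_ideal. Qed.

Lemma van_homog e (g : S) : g \is e.-homog -> (I g <-> forall x, x \in X -> g.@[x] = 0).
Proof.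
move=> hg; rewrite van_iff; split=> H x xX; move: (H x xX).
  by move/eqP; rewrite (phi_homog_eq0 _ hg) => /eqP.
by move/eqP; rewrite -(phi_homog_eq0 _ hg) => /eqP.
Qed.

Lemma van_pihomog e (h : S) : I h -> I (pihomog mdeg e h).
Proof.
move=> /van_iff H; apply/(van_homog (pihomogP _ _ _)) => x xX.
by rewrite -coef_phi H // coef0.
Qed.

End Van.
Section PolyPrime.
Variable K : fieldType.
Definition pprime (Q : {poly K} -> Prop) :=
  Q 0 /\ (forall a b, Q a -> Q b -> Q (a + b)) /\ (forall r a, Q a -> Q (r * a)) /\
  ~ Q 1 /\ (forall a b, Q (a * b) -> Q a \/ Q b).

Lemma no_pchain (Q0 Q1 Q2 : {poly K} -> Prop) :
  pprime Q0 -> pprime Q1 -> pprime Q2 ->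
  (forall a, Q1 a -> Q2 a) ->
  (exists a, Q1 a /\ ~ Q0 a) -> (exists b, Q2 b /\ ~ Q1 b) -> False.
Proof.
move=> [Q00 _] [_ [Q1D [Q1M [Q11 Q1P]]]] [_ [Q2D [Q2M [Q21 _]]]] S12 [a [Q1a nQ0a]] [b [Q2b nQ1b]].
have anz : a != 0 by apply/eqP => a0; apply: nQ0a; rewrite a0.
suff: forall n p, Q1 p -> p != 0 -> (size p <= n)%N -> False.
  by move/(_ (size a) a Q1a anz (leqnn _)).
elim=> [|n IH] p Q1p pnz.
  by rewrite leqn0 size_poly_eq0 (negbTE pnz).
move=> sp.
have [[u v] /= Hb] := Bezoutp b p.
set g := u * b + v * p in Hb.
have Q2g : Q2 g by apply: Q2D; apply: Q2M => //; apply: S12.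
have gcdnz : gcdp b p != 0 by rewrite gcdp_eq0 negb_and pnz orbT.
have sg : size g = size (gcdp b p) by apply: eqp_size.
have gdp : g %| p by rewrite (eqp_dvdl _ Hb) dvdp_gcdr.
have gdb : g %| b by rewrite (eqp_dvdl _ Hb) dvdp_gcdl.
have gnz : g != 0 by rewrite -size_poly_eq0 sg size_poly_eq0.
case: (eqVneq (size g) 1%N) => [/eqP /size_poly1P [c cnz gc]|sg1].
  apply: Q21; have -> : (1 : {poly K}) = (c^-1)%:P * g by rewrite gc -polyCM mulVf.
  exact: Q2M.
have sg2 : (1 < size g)%N.
  by move: gnz sg1; rewrite -size_poly_eq0; case: (size g) => [|[|]].
have Ep := divpK gdp.
have : Q1 (p %/ g * g) by rewrite Ep.
case/Q1P => [Q1q|Q1g].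
  have qnz : p %/ g != 0 by apply/eqP => q0; move: Ep; rewrite q0 mul0r => /esym/eqP; rewrite (negbTE pnz).
  apply: (IH _ Q1q qnz).
  have : (size (p %/ g * g)%R <= n.+1)%N by rewrite Ep.
  rewrite size_mul //.
  move: sg2; case: (size g) => [|[|k]] //= _; rewrite addnS /=.
  by rewrite addnS ltnS => H; apply: leq_trans H; apply: leq_addr.
apply: nQ1b; rewrite -(divpK gdb); exact: Q1M.
Qed.
End PolyPrime.
Section Krull.
Variables (K : finFieldType) (s : nat).
Local Notation S := {mpoly K[s]}.
Variable X : {set {ffun 'I_s -> K}}.
Local Notation I := (vanishing_ideal X).

Definition psi (j : 'I_s) (p : {poly K}) : S := \sum_(i < size p) p`_i *: 'X_j ^+ i.

Lemma phi_psi (x : 'I_s -> K) j p : x j = 1 -> phi x (psi j p) = p.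
Proof.
move=> xj; rewrite /psi /phi raddf_sum /=.
rewrite [RHS](esym (coefK p)) poly_def; apply: eq_bigr => i _.
rewrite mmapZ rmorphXn /= mmapX mmap1U xj mul1r /=.
by rewrite mul_polyC.
Qed.

Lemma pivot (x : {ffun 'I_s -> K}) : normalized x -> exists j, x j = 1.
Proof. by case/existsP => j /andP [/eqP xj _]; exists j. Qed.

Lemma prime_ker (P : pset K s) : is_prime P -> (forall h, I h -> P h) ->
  exists x, x \in X /\ (forall h, phi x h = 0 -> P h).
Proof.
move=> [HP [nP1 Pp]] IP.
apply: contrapT => Hn.
have H : forall x, x \in X -> exists h, phi x h = 0 /\ ~ P h.
  move=> x xX; apply: contrapT => Hn2; apply: Hn; exists x; split => // h h0.
  by apply: contrapT => nPh; apply: Hn2; exists h.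
suff [H0 [H1 H2]] : exists H0, (forall x, x \in enum X -> phi x H0 = 0) /\ ~ P H0.
  apply: H2; apply: IP; apply/van_iff => x xX; apply: H1; by rewrite mem_enum.
have : forall x, x \in enum X -> exists h, phi x h = 0 /\ ~ P h.
  by move=> x; rewrite mem_enum; apply: H.
elim: (enum X) => [|y r IH] Hr.
  by exists 1; split.
have [H0 [H1 H2]] : exists H0, (forall x, x \in r -> phi x H0 = 0) /\ ~ P H0.
  by apply: IH => x xin; apply: Hr; rewrite inE xin orbT.
have [h [h0 nPh]] : exists h, phi y h = 0 /\ ~ P h by apply: Hr; rewrite inE eqxx.
exists (H0 * h); split.
  move=> x; rewrite inE => /orP [/eqP ->|xin]; first by rewrite phiM h0 mulr0.
  by rewrite phiM H1 // mul0r.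
by case/Pp.
Qed.

Section Img.
Variables (x : {ffun 'I_s -> K}) (j : 'I_s) (xj : x j = 1).
Definition img (P : pset K s) (p : {poly K}) := exists a, P a /\ phi x a = p.

Lemma img_prime P : is_prime P -> (forall h, phi x h = 0 -> P h) -> pprime (img P).
Proof.
move=> [HP [nP1 Pp]] Hker; have HP' := HP; case: HP' => [P0 [PD PM]].
split; first by exists 0; split; rewrite ?phi0.
split; first by move=> a b [a' [Pa <-]] [b' [Pb <-]]; exists (a' + b'); rewrite phiD; split => //; apply: PD.
split; first by move=> r a [a' [Pa <-]]; exists (psi j r * a'); rewrite phiM phi_psi //; split => //; apply: PM.
split.
  move=> [a [Pa a1]]; apply: nP1.
  have : P (a - 1) by apply: Hker; rewrite phiB a1 phi1 subrr.
  by move=> H; have := idealB HP Pa H; rewrite opprB addrC subrK.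
move=> a b [c [Pc Ec]].
have : P (psi j a * psi j b).
  have H : P (c - psi j a * psi j b) by apply: Hker; rewrite phiB phiM !phi_psi // Ec subrr.
  by have := idealB HP Pc H; rewrite opprB addrC subrK.
case/Pp => H; [left; exists (psi j a)|right; exists (psi j b)]; split => //; exact: phi_psi.
Qed.

Lemma img_strict (P P' : pset K s) : is_ideal P -> (forall h, phi x h = 0 -> P h) ->
  subset_strict P P' -> (forall a, img P a -> img P' a) /\ exists a, img P' a /\ ~ img P a.
Proof.
move=> HP Hker [sub [a [P'a nPa]]]; split.
  by move=> p [b [Pb <-]]; exists b; split => //; apply: sub.
exists (phi x a); split; first by exists a.
move=> [b [Pb Eb]]; apply: nPa.
have H : P (b - a) by apply: Hker; rewrite phiB Eb subrr.
by have := idealB HP Pb H; rewrite opprB addrC subrK.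
Qed.
End Img.

Hypothesis HXproj : forall x, x \in X -> normalized x.

Lemma no_chain2 (J : pset K s) : (forall h, I h -> J h) -> ~ prime_chain J 2.
Proof.
move=> IJ [c [Hp [Jc Hs]]].
have [x [xX Hk]] := prime_ker (Hp 0%N isT) (fun h Ih => Jc _ (IJ _ Ih)).
have [j xj] := pivot (HXproj xX).
have [s01 _] := Hs 0%N isT; have [s12 _] := Hs 1%N isT.
have Hk1 : forall h, phi x h = 0 -> c 1%N h by move=> h /Hk; apply: s01.
have Hk2 : forall h, phi x h = 0 -> c 2%N h by move=> h /Hk1; apply: s12.
have [_ e01] := img_strict (proj1 (Hp 0%N isT)) Hk (Hs 0%N isT).
have [i12 e12] := img_strict (proj1 (Hp 1%N isT)) Hk1 (Hs 1%N isT).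
exact: (no_pchain (img_prime xj (Hp 0%N isT) Hk) (img_prime xj (Hp 1%N isT) Hk1)
          (img_prime xj (Hp 2%N isT) Hk2) i12 e01 e12).
Qed.

End Krull.
Section Krull2.
Variables (K : finFieldType) (s : nat).
Local Notation S := {mpoly K[s]}.

Lemma chain1 (J : pset K s) (x : {ffun 'I_s -> K}) : normalized x ->
  (forall h, J h -> phi x h = 0) -> prime_chain J 1.
Proof.
move=> nx HJ; have [j xj] := pivot nx.
exists (fun i => if i == 0%N then (fun h : S => phi x h = 0) else (fun h => (phi x h).[0] = 0)).
split.
  case=> [|[|]] // _ /=; split.
  - split; first by rewrite phi0.
    split; first by move=> a b Ha Hb; rewrite phiD Ha Hb addr0.
    by move=> r a Ha; rewrite phiM Ha mulr0.
  - split; first by rewrite phi1; apply/eqP; rewrite oner_eq0.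
    by move=> a b; rewrite phiM => /eqP; rewrite mulf_eq0 => /orP [/eqP|/eqP]; [left|right].
  - split; first by rewrite phi0 horner0.
    split; first by move=> a b Ha Hb; rewrite phiD hornerD Ha Hb addr0.
    by move=> r a Ha; rewrite phiM hornerM Ha mulr0.
  - split; first by rewrite phi1 hornerC; apply/eqP; rewrite oner_eq0.
    by move=> a b; rewrite phiM hornerM => /eqP; rewrite mulf_eq0 => /orP [/eqP|/eqP]; [left|right].
split; first exact: HJ.
case=> // _; split; first by move=> f /= ->; rewrite horner0.
exists 'X_j => /=.
have E : phi x 'X_j = 'X by rewrite /phi mmapX mmap1U xj mul1r.
by rewrite E hornerX; split => // /eqP; rewrite polyX_eq0.
Qed.

Lemma chain_trunc (J : pset K s) k j : (j <= k)%N -> prime_chain J k -> prime_chain J j.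
Proof.
move=> jk [c [H1 [H2 H3]]]; exists c; split => //.
  by move=> i ij; apply: H1; exact: leq_trans ij jk.
split => // i ij; apply: H3; exact: leq_trans ij jk.
Qed.

Lemma krull1 (J : pset K s) : prime_chain J 1 -> ~ prime_chain J 2 -> krull_dim J 1.
Proof. by move=> H1 H2; split. Qed.

Lemma krull_uniq (J : pset K s) k : prime_chain J 1 -> ~ prime_chain J 2 -> krull_dim J k -> k = 1%N.
Proof.
move=> H1 H2 [Hk Hk1]; case: k Hk Hk1 => [|[|k]] Hk Hk1 //.
by exfalso; apply: H2; apply: chain_trunc Hk.
Qed.
End Krull2.
Section Interp.
Variables (K : finFieldType) (s : nat).
Local Notation S := {mpoly K[s]}.
Implicit Types x y : {ffun 'I_s -> K}.

Lemma norm_piv x : normalized x -> exists p : 'I_s, x p = 1 /\ forall k : 'I_s, (k < p)%N -> x k = 0.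
Proof.
case/existsP => p /andP [/eqP xp /forallP H]; exists p; split => // k kp.
by have := H k; rewrite kp /= => /eqP.
Qed.

Lemma sep x y : normalized x -> normalized y -> x != y ->
  exists i j, x i * y j != x j * y i.
Proof.
move=> nx ny nxy; apply: contrapT => Hn.
have H : forall i j, x i * y j = x j * y i.
  move=> i j; apply/eqP; apply: contrapT => Hne; apply: Hn; exists i, j; exact/negP.
have [px [xp Hx]] := norm_piv nx; have [py [yp Hy]] := norm_piv ny.
have Ep : px = py.
  apply/val_inj/eqP; rewrite eqn_leq; apply/andP; split; rewrite leqNgt; apply/negP => lt.
    have := H py px; rewrite yp xp ?(Hx _ lt) ?(Hy _ lt) ?mul1r ?mulr1 ?mul0r ?mulr0 => E; have := @oner_neq0 K; by rewrite E eqxx.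
  have := H px py; rewrite yp xp ?(Hx _ lt) ?(Hy _ lt) ?mul1r ?mulr1 ?mul0r ?mulr0 => E; have := @oner_neq0 K; by rewrite E eqxx.
move/negP: nxy; apply; apply/eqP/ffunP => i.
by have := H i px; rewrite xp Ep yp mulr1 mul1r.
Qed.

Lemma dhomogXU (i : 'I_s) : ('X_i : S) \is 1.-homog.
Proof. have H : ('X_[U_(i)] : S) \is 1.-homog by rewrite dhomogX; apply/eqP; exact: mdeg1. exact: H. Qed.

Lemma lin_sep x y : normalized x -> normalized y -> x != y ->
  exists L : S, L \is 1.-homog /\ L.@[y] = 0 /\ L.@[x] != 0.
Proof.
move=> nx ny nxy; have [i [j H]] := sep nx ny nxy.
exists (y j *: 'X_i - y i *: 'X_j); split.
  by apply: rpredB; apply: rpredZ; apply: dhomogXU.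
by rewrite !mevalB !mevalZ !mevalXU mulrC subrr; split => //; rewrite mulrC [y i * _]mulrC subr_eq0.
Qed.

Lemma prod_sep x (r : seq {ffun 'I_s -> K}) : normalized x ->
  (forall y, y \in r -> normalized y /\ y != x) ->
  exists A : S, A \is (size r).-homog /\ (forall y, y \in r -> A.@[y] = 0) /\ A.@[x] != 0.
Proof.
move=> nx; elim: r => [|y r IH] Hr.
  by exists 1; split; [exact: dhomog1 | split => //; rewrite meval1 oner_eq0].
have [A [hA [Ar Ax]]] : exists A : S, A \is (size r).-homog /\ (forall y, y \in r -> A.@[y] = 0) /\ A.@[x] != 0.
  by apply: IH => z zr; apply: Hr; rewrite inE zr orbT.
have [ny nyx] := Hr y (mem_head _ _).
have xny : x != y by rewrite eq_sym.
have [L [hL [Ly Lx]]] := lin_sep nx ny xny.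
exists (A * L); split; first by rewrite /= -add1n addnC; exact: dhomogM.
split; last by rewrite mevalM mulf_neq0.
move=> z; rewrite inE => /orP [/eqP ->|zr]; first by rewrite mevalM Ly mulr0.
by rewrite mevalM Ar // mul0r.
Qed.

Variable X : {set {ffun 'I_s -> K}}.
Hypothesis HXproj : forall x, x \in X -> normalized x.

Lemma basis_pt x D : normalized x -> (#|X| <= D)%N ->
  exists B : S, B \is D.-homog /\ (forall y, y \in X -> y != x -> B.@[y] = 0) /\ B.@[x] != 0.
Proof.
move=> nx XD.
have [A [hA [Ar Ax]]] : exists A : S, A \is (size [seq y <- enum X | y != x]).-homog /\
   (forall y, y \in [seq y <- enum X | y != x] -> A.@[y] = 0) /\ A.@[x] != 0.
  apply: prod_sep => // y; rewrite mem_filter mem_enum => /andP [yx yX]; split => //; exact: HXproj.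
have [j [xj _]] := norm_piv nx.
set k := size _ in hA.
have kX : (k <= D)%N.
  apply: leq_trans XD; rewrite cardE /k size_filter; exact: count_size.
exists (A * 'X_j ^+ (D - k)); split.
  have H := dhomogM hA (dhomogMn (D - k) (dhomogXU j)).
  by rewrite mul1n subnKC in H.
split; last by rewrite mevalM rmorphXn /= mevalXU xj expr1n mulr1.
move=> y yX yx; rewrite mevalM Ar ?mul0r //.
by rewrite mem_filter mem_enum yX yx.
Qed.

Lemma interp D (c : {ffun 'I_s -> K} -> K) : (#|X| <= D)%N ->
  exists g : S, g \is D.-homog /\ forall x, x \in X -> g.@[x] = c x.
Proof.
move=> XD.
suff H : forall r : seq {ffun 'I_s -> K}, (forall x, x \in r -> x \in X) -> exists g : S, g \is D.-homog /\
   forall y, y \in X -> g.@[y] = if y \in r then c y else 0.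
  have [g [hg Hg]] : exists g : S, g \is D.-homog /\
    forall y, y \in X -> g.@[y] = if y \in enum X then c y else 0.
    by apply: H => x; rewrite mem_enum.
  by exists g; split => // x xX; rewrite Hg // mem_enum xX.
elim=> [|x r IH] Hr.
  by exists 0; split; [exact: rpred0 | move=> y _; rewrite meval0].
have [g [hg Hg]] : exists g : S, g \is D.-homog /\ forall y, y \in X -> g.@[y] = if y \in r then c y else 0.
  by apply: IH => y yr; apply: Hr; rewrite inE yr orbT.
have xX : x \in X by apply: Hr; exact: mem_head.
case: (boolP (x \in r)) => xr.
  exists g; split => // y yX; rewrite Hg // inE.
  by case: (eqVneq y x) => [->|] //=; rewrite xr.
have [B [hB [By Bx]]] := basis_pt (HXproj xX) XD.
exists (g + (c x / B.@[x]) *: B); split; first by apply: rpredD => //; apply: rpredZ.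
move=> y yX; rewrite mevalD mevalZ Hg // inE.
case: (eqVneq y x) => [->|yx] /=.
  by rewrite (negbTE xr) add0r divfK.
by rewrite (By y yX yx) mulr0 addr0.
Qed.
End Interp.
Section HF.
Variables (K : finFieldType) (s : nat).
Local Notation S := {mpoly K[s]}.
Variable D : nat.
Local Notation n := (nmonoms s D).

Definition mon (i : 'I_n) : 'X_{1..s} := val (val (@enum_val _ (mem {: monoms s D}) i)).

Lemma mon_deg i : mdeg (mon i) = D.
Proof. by rewrite /mon; case: (enum_val i) => m /= /eqP. Qed.

Lemma poly_ofE (v : 'rV[K]_n) : poly_of v = \sum_(i < n) v 0 i *: 'X_[mon i].
Proof. by []. Qed.

Lemma poly_of_homog (v : 'rV[K]_n) : poly_of v \is D.-homog.
Proof.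
rewrite poly_ofE; apply: rpred_sum => i _; apply: rpredZ.
by rewrite dhomogX; apply/eqP; exact: mon_deg.
Qed.

Lemma poly_of_lin (a : K) (v w : 'rV[K]_n) : poly_of (a *: v + w) = a *: poly_of v + poly_of w.
Proof.
rewrite !poly_ofE scaler_sumr -big_split /=; apply: eq_bigr => i _.
by rewrite !mxE scalerDl scalerA.
Qed.

Lemma sum_monoms (F : 'X_{1..s} -> S) :
  \sum_(i < n) F (mon i) = \sum_(m : 'X_{1..s < D.+1} | mdeg m == D) F m.
Proof.
rewrite /mon -(big_enum_val (A := mem {: monoms s D}) (fun u : monoms s D => F (val (val u)))).
rewrite [RHS](reindex_omap (val : monoms s D -> _) insub); last first.
  by move=> i Pi; rewrite insubT.
apply: eq_big => [u|u _] //=.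
case: u => m hm /=; rewrite hm insubT /=.
by apply/esym/eqP; congr Some; apply: val_inj.
Qed.

Lemma homog_msize (g : S) : g \is D.-homog -> (msize g <= D.+1)%N.
Proof.
move=> hg; rewrite msizeE; apply/bigmax_leqP_seq => m mg _.
by rewrite ltnS (dhomog_mf hg mg).
Qed.

Lemma poly_of_surj (g : S) : g \is D.-homog -> exists v : 'rV[K]_n, poly_of v = g.
Proof.
move=> hg; exists (\row_i g@_(mon i)); rewrite poly_ofE.
rewrite (eq_bigr (fun i => (fun m => g@_m *: 'X_[m]) (mon i))); last by move=> i _; rewrite mxE.
rewrite (sum_monoms (fun m => g@_m *: 'X_[m])) -(pihomogwE mdeg D (homog_msize hg)).
exact: pihomog_dE.
Qed.

Variable Z : {set {ffun 'I_s -> K}}.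
Definition ev (v : 'rV[K]_n) : 'rV[K]_#|Z| := \row_(k < #|Z|) (poly_of v).@[@enum_val _ (mem Z) k].

Lemma ev_lin : linear ev.
Proof.
move=> a v w; apply/rowP => k; rewrite !mxE poly_of_lin mevalD mevalZ.
by [].
Qed.

HB.instance Definition _ := GRing.isLinear.Build K _ _ _ ev ev_lin.

Lemma hilbert_eq (J : pset K s) :
  (forall g : S, g \is D.-homog -> (J g <-> forall z, z \in Z -> g.@[z] = 0)) ->
  (forall c : {ffun 'I_s -> K} -> K, exists g : S, g \is D.-homog /\ forall z, z \in Z -> g.@[z] = c z) ->
  hilbert_fun J D = #|Z|.
Proof.
move=> HJ Hint.
pose E := linfun ev.
have Hker : forall v, (v \in lker E) = `[< J (poly_of v) >].
  move=> v; rewrite memv_ker lfunE /=.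
  apply/idP/asboolP.
    move/eqP/rowP => H; apply/(HJ _ (poly_of_homog v)) => z zZ.
    have := H (enum_rank_in zZ z); rewrite !mxE enum_rankK_in //.
  move/(HJ _ (poly_of_homog v)) => H; apply/eqP/rowP => k; rewrite !mxE.
  exact: H (enum_valP k).
have Hspan : span (graded_piece J D) = lker E.
  apply/eqP; rewrite eqEsubv; apply/andP; split.
    by apply/span_subvP => v; rewrite mem_filter => /andP [H _]; rewrite Hker.
  apply/subvP => v; rewrite Hker => H; apply: memv_span.
  by rewrite mem_filter H mem_enum inE.
have Himg : limg E = fullv.
  apply/eqP; rewrite eqEsubv subvf /=; apply/subvP => w _.
  have [g [hg Hg]] := Hint (fun z => \sum_(k < #|Z|) (enum_val k == z)%:R * w 0 k).
  have [v Hv] := poly_of_surj hg.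
  have -> : w = E v.
    apply/rowP => k; rewrite lfunE /= mxE Hv Hg ?enum_valP // (bigD1 k) //= eqxx mul1r.
    rewrite big1 ?addr0 // => k' nk; rewrite (inj_eq enum_val_inj) (negbTE nk) mul0r //.
  apply: memv_img; exact: memvf.
have := limg_ker_dim E fullv; rewrite capfv Himg !dimvf /= !dim_matrix !mul1r.
rewrite /hilbert_fun Hspan; move: (\dim (lker E)) => k H; rewrite -H; exact: addKn.
Qed.
End HF.
Section Deg.
Variables (K : finFieldType) (s : nat).
Local Notation S := {mpoly K[s]}.

Lemma degree_of (J : pset K s) (z : nat) N :
  prime_chain J 1 -> ~ prime_chain J 2 -> (forall D, (N <= D)%N -> hilbert_fun J D = z) ->
  has_degree J (z%:R) /\ forall e, has_degree J e -> e = z%:R.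
Proof.
move=> C1 C2 HF; split.
  exists 1%N; split; first exact: krull1.
  move=> eps eps0; exists N => d Nd.
  by rewrite HF // fact0 expr0 divr1 mul1r subrr normr0.
move=> e [k [Hk Hb]]; have k1 := krull_uniq C1 C2 Hk; subst k.
apply/eqP; apply: contrapT => /negP ne.
have eps0 : 0 < `|z%:R - e| by rewrite normr_gt0 subr_eq0 eq_sym.
have [N' HN'] := Hb _ eps0.
have := HN' (maxn N N') (leq_maxr _ _).
by rewrite HF ?leq_maxl // fact0 expr0 divr1 mul1r ltxx.
Qed.
End Deg.
Section Add.
Variables (K : finFieldType) (s : nat).
Local Notation S := {mpoly K[s]}.
Variable X : {set {ffun 'I_s -> K}}.
Hypothesis HXproj : forall x, x \in X -> normalized x.
Local Notation I := (vanishing_ideal X).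

Lemma I_hf D : (#|X| <= D)%N -> hilbert_fun I D = #|X|.
Proof.
move=> XD; apply: hilbert_eq; first by move=> g hg; exact: (van_homog X hg).
by move=> c; exact: (interp HXproj c XD).
Qed.

Lemma zerosP (f : S) x : x \in zeros_in X f = (x \in X) && (f.@[x] == 0).
Proof. by rewrite inE. Qed.

Lemma add_phi (f : S) d : f \is d.-homog -> forall h, ideal_add I f h ->
  forall z, z \in zeros_in X f -> phi z h = 0.
Proof.
move=> hf h Hh; apply: (ideal_ind (phi_ideal _) _ Hh) => g [Ig|->] z.
  by rewrite zerosP => /andP [zX _]; move: Ig => /van_iff; apply.
by rewrite zerosP => /andP [_ /eqP fz]; rewrite (phi_homog _ hf) fz polyC0 mul0r.
Qed.

Lemma add_iff (f : S) d D g : f \is d.-homog -> (d + #|X| <= D)%N -> g \is D.-homog ->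
  (ideal_add I f g <-> forall z, z \in zeros_in X f -> g.@[z] = 0).
Proof.
move=> hf dD hg; split.
  move=> Hg z zZ; apply/eqP; rewrite -(phi_homog_eq0 _ hg).
  by rewrite (add_phi hf Hg zZ).
move=> Hz.
have XD : (#|X| <= D - d)%N by rewrite leq_subRL ?(leq_trans _ dD) ?leq_addr.
have [a [ha Ha]] := interp HXproj (fun x => g.@[x] / f.@[x]) XD.
have haf : a * f \is D.-homog.
  have H := dhomogM ha hf; rewrite subnK in H => //.
  by apply: leq_trans dD; exact: leq_addr.
have HI : I (g - a * f).
  apply/(van_homog _ (rpredB hg haf)) => x xX; rewrite mevalB mevalM Ha //.
  case: (eqVneq (f.@[x]) 0) => fx.
    by rewrite fx mulr0 subr0; apply: Hz; rewrite zerosP xX fx eqxx.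
  by rewrite divfK // subrr.
have -> : g = (g - a * f) + a * f by rewrite subrK.
have [_ [AD AM]] := gen_ideal_is_ideal (fun h => I h \/ h = f).
apply: AD; first by apply: gen_ideal_gen; left.
by apply: AM; apply: gen_ideal_gen; right.
Qed.

Lemma add_hf (f : S) d D : f \is d.-homog -> (d + #|X| <= D)%N ->
  hilbert_fun (ideal_add I f) D = #|zeros_in X f|.
Proof.
move=> hf dD; apply: hilbert_eq; first by move=> g hg; exact: add_iff hf dD hg.
move=> c.
have ZX : forall x, x \in zeros_in X f -> normalized x.
  by move=> x; rewrite zerosP => /andP [xX _]; exact: HXproj.
apply: (interp ZX c).
have ZX' : (#|zeros_in X f| <= #|X|)%N.
  by apply: subset_leq_card; apply/subsetP => x; rewrite zerosP => /andP [].
apply: leq_trans ZX' _; apply: leq_trans dD; exact: leq_addl.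
Qed.

Lemma I_chain1 : (0 < #|X|)%N -> prime_chain I 1.
Proof.
case/card_gt0P => x xX; apply: (chain1 (HXproj xX)) => h /van_iff; apply; exact: xX.
Qed.

Lemma add_chain1 (f : S) d : f \is d.-homog -> forall x, x \in zeros_in X f ->
  prime_chain (ideal_add I f) 1.
Proof.
move=> hf x xZ; have := xZ; rewrite zerosP => /andP [xX _].
apply: (chain1 (HXproj xX)) => h Hh; exact: (add_phi hf Hh xZ).
Qed.

Lemma add_nochain2 (f : S) : ~ prime_chain (ideal_add I f) 2.
Proof. apply: (no_chain2 HXproj) => h Ih; apply: gen_ideal_gen; by left. Qed.

Lemma I_nochain2 : ~ prime_chain I 2.
Proof. by apply: (no_chain2 HXproj). Qed.

End Add.
Section NF.
Variables (K : finFieldType) (s : nat).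
Local Notation S := {mpoly K[s]}.
Variable X : {set {ffun 'I_s -> K}}.
Hypothesis HXproj : forall x, x \in X -> normalized x.
Local Notation I := (vanishing_ideal X).
Variable ord : rel 'X_{1..s}.
Hypothesis Hord : monomial_order ord.
Variable d : nat.

Lemma ord_refl m : ord m m.
Proof. by case: Hord => H _; apply: H. Qed.
Lemma ord_anti m1 m2 : ord m1 m2 -> ord m2 m1 -> m1 = m2.
Proof. by case: Hord => _ [H _] h1 h2; apply: H; rewrite h1 h2. Qed.
Lemma ord_trans m2 m1 m3 : ord m1 m2 -> ord m2 m3 -> ord m1 m3.
Proof. by case: Hord => _ [_ [H _]]; apply: H. Qed.
Lemma ord_total m1 m2 : ord m1 m2 || ord m2 m1.
Proof. by case: Hord => _ [_ [_ [H _]]]; apply: H. Qed.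
Lemma ord_add m1 m2 m : ord m1 m2 -> ord (m1 + m)%MM (m2 + m)%MM.
Proof. by case: Hord => _ [_ [_ [_ [_ H]]]]; apply: H. Qed.

Lemma seq_max (r : seq 'X_{1..s}) : r != [::] -> exists2 m, m \in r & forall m', m' \in r -> ord m' m.
Proof.
elim: r => [|a r IH] // _.
case: (eqVneq r [::]) => [->|rnz].
  by exists a; rewrite ?inE // => m'; rewrite inE => /eqP ->; apply: ord_refl.
have [m mr Hm] := IH rnz.
case/orP: (ord_total a m) => H.
  exists m; first by rewrite inE mr orbT.
  by move=> m'; rewrite inE => /orP [/eqP ->|/Hm].
exists a; first by rewrite inE eqxx.
move=> m'; rewrite inE => /orP [/eqP ->|/Hm H']; first exact: ord_refl.
exact: ord_trans H' H.
Qed.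

Lemma lead_ex (f : S) : f != 0 -> exists m, is_lead_monom ord f m.
Proof.
move=> fnz; have : msupp f != [::] by rewrite msupp_eq0.
by case/seq_max => m mf Hm; exists m; split.
Qed.

Lemma F_props (f : S) : F_set ord I d f ->
  [/\ f \is d.-homog, ~ I f & exists x, x \in X /\ f.@[x] = 0].
Proof.
move=> [fnz [Hst Hcol]]; have hf : f \is d.-homog.
  by apply/dhomogP => m /Hst [].
split => //.
  move=> If; have [m [mf Hm]] := lead_ex fnz.
  have [_ Hn] := Hst m mf; apply: Hn; apply: gen_ideal_gen.
  by exists f, m; split => //; split => //; split => //; split.
apply: contrapT => Hn; apply: Hcol => h; rewrite /colon; split.
  move/van_iff => H; apply/van_iff => x xX; have := H x xX.
  rewrite phiM (phi_homog _ hf) => /eqP; rewrite mulf_eq0 => /orP [/eqP //|].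
  rewrite mulf_eq0 polyC_eq0 expf_eq0 polyX_eq0 andbF orbF => /eqP fx.
  by exfalso; apply: Hn; exists x.
by move=> Ih; apply: idealMr => //; exact: van_ideal.
Qed.

Definition rk (m : 'X_{1..s}) : nat :=
  #|[pred m' : 'X_{1..s < d.+1} | (mdeg m' == d) && ord m' m && (bmnm m' != m)]|.

Lemma rk_lt m1 m2 : mdeg m1 = d -> ord m1 m2 -> m1 != m2 -> (rk m1 < rk m2)%N.
Proof.
move=> d1 o12 n12; apply: proper_card; apply/properP; split.
  apply/subsetP => m' /=; rewrite !inE => /andP [/andP [dm o1] n1].
  rewrite dm (ord_trans o1 o12) /=; apply/negP => /eqP E.
  by rewrite E in o1; move: n12; rewrite (ord_anti o12 o1) eqxx.
have pr : (mdeg m1 < d.+1)%N by rewrite d1.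
exists (BMultinom pr); rewrite !inE /= ?d1 ?eqxx ?o12 ?n12 // andbF //.
Qed.

Lemma red_elem m : mdeg m = d -> initial_ideal ord I 'X_[m] ->
  exists g' : S, [/\ I g', g' \is d.-homog, g'@_m = 1 & forall m', g'@_m' != 0 -> ord m' m].
Proof.
move=> dm [l [El Hl]].
have : exists g0 m0 k, [/\ I g0, is_lead_monom ord g0 m0 & m = (m0 + k)%MM].
  apply: contrapT => Hn.
  have : ('X_[m] : S)@_m = 0.
    rewrite El raddf_sum /=; apply: big1_seq => p /andP [_ pl] /=.
    have [g0 [m0 [Ig0 [_ [Hld Ep2]]]]] := Hl p pl.
    apply/eqP; rewrite mcoeff_eq0; apply/negP => Hm; apply: Hn.
    rewrite Ep2 in Hm; have := perm_mem (msuppMX p.1 m0) m; rewrite Hm => /esym /mapP [k kin Ek].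
    by exists g0, m0, k; split.
  by rewrite mcoeffX eqxx => /eqP; rewrite oner_eq0.
case=> g0 [m0 [k [Ig0 [m0g Hld] Em]]].
pose g1 := g0 * 'X_[k].
have Ig1 : I g1 by apply: idealMr (van_ideal X) Ig0.
have c1 : g1@_m = g0@_m0 by rewrite Em addmC mcoeffMX.
have s1 : forall m', g1@_m' != 0 -> ord m' m.
  move=> m'; rewrite -mcoeff_msupp => Hm'; have := perm_mem (msuppMX g0 k) m'.
  rewrite Hm' => /esym/mapP [m1 m1in ->].
  by rewrite Em addmC; apply: ord_add; apply: Hld.
pose g2 := pihomog mdeg d g1.
have c2 : g2@_m = g1@_m by rewrite mcoeff_pihomog dm eqxx.
have s2 : forall m', g2@_m' != 0 -> ord m' m.
  by move=> m'; rewrite mcoeff_pihomog; case: ifP => _; [apply: s1 | rewrite eqxx].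
have nz : g2@_m != 0 by rewrite c2 c1 -mcoeff_msupp.
exists ((g2@_m)^-1 *: g2); split.
- by apply: idealZ (van_ideal X) _; apply: van_pihomog.
- by apply: rpredZ; apply: pihomogP.
- by rewrite mcoeffZ mulVf.
- by move=> m'; rewrite mcoeffZ mulf_eq0 negb_or => /andP [_ /s2].
Qed.
Lemma nf_ind n : forall h : S, h \is d.-homog ->
  (forall m, h@_m != 0 -> ~ standard_monom ord I d m -> (rk m < n)%N) ->
  exists f : S, [/\ f \is d.-homog, (forall m, m \in msupp f -> standard_monom ord I d m) & I (h - f)].
Proof.
have [VI0 [VD _]] := van_ideal X.
elim: n => [|n IH] h hh Hh.
  exists h; split => //; last by rewrite subrr.
  move=> m mh; apply: contrapT => ns.
  have hm : h@_m != 0 by rewrite -mcoeff_msupp.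
  by have := Hh m hm ns.
case: (pselect (exists m, [/\ h@_m != 0, ~ standard_monom ord I d m & rk m = n])) => [[m [hm nsm rm]]|Hno].
  have dm : mdeg m = d by apply: (dhomog_mf hh); rewrite mcoeff_msupp.
  have Iin : initial_ideal ord I 'X_[m] by apply: contrapT => H; apply: nsm; split.
  have [g' [Ig' hg' g'm sg']] := red_elem dm Iin.
  pose h' := h - h@_m *: g'.
  have hh' : h' \is d.-homog by apply: rpredB => //; apply: rpredZ.
  have h'm : h'@_m = 0 by rewrite mcoeffB mcoeffZ g'm mulr1 subrr.
  have [f [hf sf If]] : exists f : S, [/\ f \is d.-homog,
      (forall m, m \in msupp f -> standard_monom ord I d m) & I (h' - f)].
    apply: IH => // m'' h'nz ns.
    have m''m : m'' != m by apply: contraNneq h'nz => ->; rewrite h'm.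
    have mm'' : m != m'' by rewrite eq_sym.
    have dm'' : mdeg m'' = d by apply: (dhomog_mf hh'); rewrite mcoeff_msupp.
    move: h'nz; rewrite mcoeffB mcoeffZ.
    case: (eqVneq (g'@_m'') 0) => [g0|gnz].
      rewrite g0 mulr0 subr0 => hnz.
      have := Hh m'' hnz ns; rewrite ltnS leq_eqVlt => /orP [/eqP E|] //.
      exfalso; case/orP: (ord_total m'' m) => o.
        by have := rk_lt dm'' o m''m; rewrite E rm ltnn.
      by have := rk_lt dm o mm''; rewrite E rm ltnn.
    by move=> _; rewrite -rm; apply: rk_lt => //; exact: sg'.
  exists f; split => //.
  have -> : h - f = h@_m *: g' + (h' - f) by rewrite /h'; ring.
  by apply: VD => //; apply: idealZ (van_ideal X) _.
apply: IH => // m hm ns; have := Hh m hm ns; rewrite ltnS leq_eqVlt => /orP [/eqP E|//].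
by exfalso; apply: Hno; exists m; split.
Qed.

Lemma nf (g : S) : g \is d.-homog ->
  exists f : S, [/\ f \is d.-homog, (forall m, m \in msupp f -> standard_monom ord I d m) & I (g - f)].
Proof.
move=> hg; apply: (nf_ind (n := #|{: 'X_{1..s < d.+1}}|.+1) hg) => m _ _.
by rewrite ltnS; exact: max_card.
Qed.
End NF.
Lemma arith1 (a b c dl : nat) : dl = (a - b)%N -> (b <= a)%N -> (c <= a)%N -> (dl <= a - c)%N -> (c <= b)%N.
Proof. lia. Qed.

Unset Implicit Arguments.

Theorem corollary4p8 (K : finFieldType) (s : nat)
  (X : {set {ffun 'I_s -> K}})
  (HXproj : forall x, x \in X -> normalized x)
  (HX : (2 <= #|X|)%N)
  (ord : rel 'X_{1..s}) (Hord : monomial_order ord)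
  (d : nat) (Hd : (1 <= d)%N) :
  exists (delta : nat) (degI m : rat),
    min_distance X d delta /\
    has_degree (vanishing_ideal X) degI /\
    is_max_rat (fun e => exists f, F_set ord (vanishing_ideal X) d f /\
                           has_degree (ideal_add (vanishing_ideal X) f) e) m /\
    delta%:R = degI - m /\
    (1 <= delta)%N.
Proof.
set I := vanishing_ideal X.
have zsub : forall f : {mpoly K[s]}, (#|zeros_in X f| <= #|X|)%N.
  by move=> f; apply: subset_leq_card; apply/subsetP => x; rewrite zerosP => /andP [].
have [x1 [x2 [x1X x2X n12]]] : exists x y, [/\ x \in X, y \in X & x != y] by apply/card_gt1P.
have [j [x1j _]] := norm_piv (HXproj _ x1X).
have [L [hL [Lx2 Lx1]]] := lin_sep (HXproj _ x1X) (HXproj _ x2X) n12.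
pose w := L * 'X_j ^+ (d - 1).
have hw : w \is d.-homog.
  have H := dhomogM hL (dhomogMn (d - 1) (@dhomogXU K s j)); by rewrite mul1n subnKC in H.
have wx1 : w.@[x1] != 0 by rewrite mevalM rmorphXn /= mevalXU x1j expr1n mulr1.
have wx2 : w.@[x2] = 0 by rewrite mevalM Lx2 mul0r.
have nIw : ~ I w by move/(van_homog X hw) => H; move: wx1; rewrite H ?eqxx.
have zw : (0 < #|zeros_in X w|)%N by apply/card_gt0P; exists x2; rewrite zerosP x2X wx2 eqxx.
pose P := fun v => exists f : {mpoly K[s]}, f \is d.-homog /\ ~ I f /\ v = (#|X| - #|zeros_in X f|)%N.
have [delta Hmin] : exists delta, is_min_nat P delta.
  have ex : exists v, `[< P v >] by exists (#|X| - #|zeros_in X w|)%N; apply/asboolP; exists w.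
  case: (ex_minnP ex) => delta /asboolP Pd Hm; exists delta; split => // y Py; apply: Hm; exact/asboolP.
have [[g [hg [nIg Ed]]] Hle] := Hmin.
have dw : (delta <= #|X| - #|zeros_in X w|)%N by apply: Hle; exists w.
have zgX := zsub g; have zwX := zsub w.
have zg : (0 < #|zeros_in X g|)%N by lia.
have d1 : (1 <= delta)%N.
  have [x [xX gx]] : exists x, x \in X /\ g.@[x] != 0.
    apply: contrapT => Hn; apply: nIg; apply/(van_homog X hg) => x xX.
    by apply/eqP; apply: contrapT => H; apply: Hn; exists x; split => //; apply/negP.
  have : (#|zeros_in X g| < #|X|)%N.
    apply: proper_card; apply/properP; split.
      by apply/subsetP => y; rewrite zerosP => /andP [].
    by exists x => //; rewrite zerosP xX (negbTE gx).
  lia.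
have [f [hf sf Igf]] := nf X Hord hg.
have agree : forall x, x \in X -> f.@[x] = g.@[x].
  move=> x xX; have := (proj1 (van_homog X (rpredB hg hf)) Igf) x xX.
  by rewrite mevalB => /eqP; rewrite subr_eq0 => /eqP.
have Zfg : zeros_in X f = zeros_in X g.
  by apply/setP => x; rewrite !zerosP; case xX: (x \in X) => //=; rewrite agree.
have [x0 x0Z] : exists x0, x0 \in zeros_in X g by apply/card_gt0P.
have x0f : x0 \in zeros_in X f by rewrite Zfg.
have Ff : F_set ord I d f.
  split.
    apply/eqP => f0; apply: nIg; move: Igf; by rewrite f0 subr0.
  split => // Hc.
  have := x0f; rewrite zerosP => /andP [x0X /eqP fx0].
  have [B [hB [By Bx]]] := basis_pt HXproj (HXproj _ x0X) (leqnn #|X|).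
  have IBf : I (B * f).
    apply/(van_homog X (dhomogM hB hf)) => x xX; rewrite mevalM.
    case: (eqVneq x x0) => [->|nx]; first by rewrite fx0 mulr0.
    by rewrite By // mul0r.
  have IB : I B by apply/(Hc B).
  by move: Bx; rewrite (proj1 (van_homog X hB) IB x0 x0X) eqxx.
have degI : has_degree I (#|X|%:R) /\ forall e, has_degree I e -> e = #|X|%:R.
  exact: (@degree_of K s I #|X| #|X| (I_chain1 HXproj (ltnW HX)) (I_nochain2 HXproj)
     (fun D XD => I_hf HXproj XD)).
have degf : has_degree (ideal_add I f) (#|zeros_in X g|%:R).
  rewrite -Zfg; exact: (@degree_of K s (ideal_add I f) #|zeros_in X f| (d + #|X|)%N
     (add_chain1 HXproj hf x0f) (add_nochain2 HXproj (f := f)) (fun D DD => add_hf HXproj hf DD)).1.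
exists delta, (#|X|%:R), (#|zeros_in X g|%:R); split => //.
split; first exact: degI.1.
split.
  split; first by exists f; split.
  move=> e [f' [Ff' He]].
  have [hf' nIf' [x' [x'X fx']]] := F_props Hord Ff'.
  have x'Z : x' \in zeros_in X f' by rewrite zerosP x'X fx' eqxx.
  have degf' : forall e, has_degree (ideal_add I f') e -> e = #|zeros_in X f'|%:R.
    exact: (@degree_of K s (ideal_add I f') #|zeros_in X f'| (d + #|X|)%N
     (add_chain1 HXproj hf' x'Z) (add_nochain2 HXproj (f := f')) (fun D DD => add_hf HXproj hf' DD)).2.
  rewrite (degf' e He) ler_nat.
  have : (delta <= #|X| - #|zeros_in X f'|)%N by apply: Hle; exists f'.
  exact: (arith1 Ed zgX (zsub f')).
split => //.
by rewrite Ed natrB.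
Qed.
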